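(* Let $R$ be a $*$-ring. Then $R$ is strongly $J$-$*$-clean if and only if (1) $R$ is strongly $*$-clean, and (2) $R/M\cong\mathbb{Z}_2$ for all maximal ideals $M$ of $R$.
   Context: All rings are associative with identity. A $*$-ring is a ring $R$ with an involution $*$, i.e. a map $a\mapsto a^*$ with $(a+b)^*=a^*+b^*$, $(ab)^*=b^*a^*$, $(a^* )^*=a$. $U(R)$ denotes the group of units and $J(R)$ the Jacobson radical of $R$. A projection is an element $e$ with $e^2=e=e^*$. $R$ is strongly $J$-$*$-clean if every $a\in R$ can be written $a=e+u$ with $e$ a projection, $u\in J(R)$ and $ae=ea$. $R$ is strongly $*$-clean if every $a\in R$ can be written $a=e+u$ with $e$ a projection, $u\in U(R)$ and $eu=ue$. Maximal ideals are two-sided. *)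

(* Defs.v *)
From HB Require Import structures.
From mathcomp Require Import all_boot all_order all_algebra.
Set Implicit Arguments. Unset Strict Implicit. Unset Printing Implicit Defensive.
Import GRing.Theory.
Local Open Scope ring_scope.

(* Rings: associative with identity (possibly the zero ring): pzRingType.
   Subsets of R are predicates R -> Prop. *)

Definition is_involution (R : pzRingType) (star : R -> R) : Prop :=
  (forall a b, star (a + b) = star a + star b) /\
  (forall a b, star (a * b) = star b * star a) /\
  (forall a, star (star a) = a).

Definition is_unit (R : pzRingType) (a : R) : Prop :=
  exists b, a * b = 1 /\ b * a = 1.

Definition left_ideal (R : pzRingType) (I : R -> Prop) : Prop :=
  I 0 /\ (forall x y, I x -> I y -> I (x + y)) /\ (forall x, I x -> I (- x)) /\
  (forall r x, I x -> I (r * x)).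

Definition two_sided_ideal (R : pzRingType) (I : R -> Prop) : Prop :=
  left_ideal I /\ (forall r x, I x -> I (x * r)).

Definition maximal_left_ideal (R : pzRingType) (L : R -> Prop) : Prop :=
  left_ideal L /\ ~ L 1 /\
  (forall L' : R -> Prop, left_ideal L' -> (forall x, L x -> L' x) -> ~ L' 1 ->
     forall x, L' x -> L x).

Definition maximal_ideal (R : pzRingType) (M : R -> Prop) : Prop :=
  two_sided_ideal M /\ ~ M 1 /\
  (forall M' : R -> Prop, two_sided_ideal M' -> (forall x, M x -> M' x) -> ~ M' 1 ->
     forall x, M' x -> M x).

Definition jacobson (R : pzRingType) (x : R) : Prop :=
  forall L : R -> Prop, maximal_left_ideal L -> L x.

Definition projection (R : pzRingType) (star : R -> R) (e : R) : Prop :=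
  e * e = e /\ star e = e.

Definition strongly_J_star_clean (R : pzRingType) (star : R -> R) : Prop :=
  forall a : R, exists e u : R,
    projection star e /\ jacobson u /\ a = e + u /\ a * e = e * a.

Definition strongly_star_clean (R : pzRingType) (star : R -> R) : Prop :=
  forall a : R, exists e u : R,
    projection star e /\ is_unit u /\ a = e + u /\ e * u = u * e.

(* R/M is isomorphic to Z_2 as rings, written on representatives:
   f : R -> 'Z_2 induces a well-defined, injective ring map on R/M
   (f x = f y <-> x - y \in M) that is a unital ring homomorphism and onto. *)
Definition quotient_iso_Z2 (R : pzRingType) (M : R -> Prop) : Prop :=
  exists f : R -> 'Z_2,
    (forall x y, f x = f y <-> M (x - y)) /\
    (forall x y, f (x + y) = f x + f y) /\
    (forall x y, f (x * y) = f x * f y) /\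
    f 1 = 1 /\
    (forall z : 'Z_2, exists x, f x = z).

(* Main.v *)
Require Import Defs.
From mathcomp Require Import all_boot all_order all_algebra.
From mathcomp Require Import boolp classical_sets.
Set Implicit Arguments. Unset Strict Implicit.
Local Open Scope ring_scope.
Import GRing.Theory.

Definition rclosed (R : pzRingType) (I : R -> Prop) := forall r x, I x -> I (x * r).

Lemma zorn_ideal (R : pzRingType) (tw : bool) (I0 : R -> Prop) :
  left_ideal I0 -> (tw -> rclosed I0) -> ~ I0 1 ->
  exists L : R -> Prop, left_ideal L /\ (tw -> rclosed L) /\ ~ L 1 /\
    (forall x, I0 x -> L x) /\
    (forall L', left_ideal L' -> (tw -> rclosed L') -> ~ L' 1 ->
       (forall x, L x -> L' x) -> forall x, L' x -> L x).
Proof.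
move=> HI0 HI0r HI01.
pose P (L : set R) := (left_ideal L /\ (tw -> rclosed L) /\ ~ L 1 /\ (forall x, I0 x -> L x))
   \/ L = set0.
have [] := @Zorn_bigcup R P.
  move=> F FP Ftot.
  have [Fall0|Fn] := pselect (forall X, F X -> X = set0).
    right; apply/seteqP; split=> x // [X FX Xx].
    by rewrite (Fall0 _ FX) in Xx.
  have [X [FX Xne]] : exists X, F X /\ X <> set0.
    apply: contra_notP Fn => H X FX; apply: contra_notP H => H; by exists X.
  have HX : forall Y, F Y -> forall x, Y x -> left_ideal Y /\ (tw -> rclosed Y) /\ ~ Y 1.
    move=> Y FY x Yx; case: (FP _ FY) => [[? [? [? _]]] //|Y0].
    by rewrite Y0 in Yx.
  have common : forall x y, (\bigcup_(Y in F) Y)%classic x -> (\bigcup_(Y in F) Y)%classic y ->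
      exists Y, F Y /\ Y x /\ Y y.
    move=> x y [Y1 FY1 Y1x] [Y2 FY2 Y2y].
    case: (Ftot _ _ FY1 FY2) => H; [exists Y2 | exists Y1]; split=> //; split=> //.
      exact: H.
    exact: H.
  left; split; [split; [|split; [|split]]|split; [|split]].
  - case: (FP _ FX) => [[[H0 _] _]|//]. by exists X.
  - move=> x y Hx Hy; have [Y [FY [Yx Yy]]] := common _ _ Hx Hy.
    have [[_ [HYD _]] _] := HX _ FY _ Yx; exists Y => //; exact: HYD.
  - move=> x [Y FY Yx]; have [[_ [_ [HYN _]]] _] := HX _ FY _ Yx; exists Y => //; exact: HYN.
  - move=> r x [Y FY Yx]; have [[_ [_ [_ HYM]]] _] := HX _ FY _ Yx; exists Y => //; exact: HYM.
  - move=> htw r x [Y FY Yx]; have [_ [HYr _]] := HX _ FY _ Yx; exists Y => //; exact: HYr.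
  - move=> [Y FY Y1]; have [_ [_ HY1]] := HX _ FY _ Y1; exact: HY1.
  - move=> x Ix; exists X => //; case: (FP _ FX) => [[_ [_ [_ H]]]|//]; exact: H.
move=> A [PA Amax].
have PA' : left_ideal A /\ (tw -> rclosed A) /\ ~ A 1 /\ (forall x, I0 x -> A x).
  case: PA => // A0; exfalso; apply: (Amax I0).
    rewrite A0; split; first by move=> x.
    move=> H; have := H 0; rewrite /set0 /=; apply.
    by case: HI0.
  by left; split.
case: PA' => HA [HAr [HA1 HIA]].
exists A; split=> //; split=> //; split=> //; split=> //.
move=> L' HL' HL'r HL'1 AL' x L'x.
apply: contrapT => nAx.
apply: (Amax L').
  split; first exact: AL'.
  move=> E; apply: nAx; exact: E.
left; split=> //; split=> //; split=> //.
by move=> y /HIA /AL'.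
Qed.


Lemma li0 (R : pzRingType) (L : R -> Prop) : left_ideal L -> L 0.
Proof. by case. Qed.
Lemma liD (R : pzRingType) (L : R -> Prop) x y : left_ideal L -> L x -> L y -> L (x + y).
Proof. by case=> _ [H _]; apply: H. Qed.
Lemma liN (R : pzRingType) (L : R -> Prop) x : left_ideal L -> L x -> L (- x).
Proof. by case=> _ [_ [H _]]; apply: H. Qed.
Lemma liM (R : pzRingType) (L : R -> Prop) r x : left_ideal L -> L x -> L (r * x).
Proof. by case=> _ [_ [_ H]]; apply: H. Qed.
Lemma liB (R : pzRingType) (L : R -> Prop) x y : left_ideal L -> L x -> L y -> L (x - y).
Proof. by move=> HL Hx Hy; apply: liD => //; apply: liN. Qed.

Lemma jac_li (R : pzRingType) : left_ideal (@jacobson R).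
Proof.
split; first by move=> L [HL _]; apply: li0.
split; first by move=> x y Hx Hy L HmL; apply: liD (Hx L HmL) (Hy L HmL); case: HmL.
split; first by move=> x Hx L HmL; apply: liN (Hx L HmL); case: HmL.
by move=> r x Hx L HmL; apply: liM (Hx L HmL); case: HmL.
Qed.

Lemma lemB (R : pzRingType) (j : R) :
  (forall x, exists v, v * (1 - x * j) = 1) -> jacobson j.
Proof.
move=> H L [HL [HL1 Lmax]]; apply: contrapT => nLj.
pose L' y := exists l x, L l /\ y = l + x * j.
have HL' : left_ideal L'.
  split; first by exists 0, 0; split; [apply: li0|rewrite mul0r addr0].
  split.
    move=> _ _ [l1 [x1 [L1 ->]]] [l2 [x2 [L2 ->]]].
    exists (l1 + l2), (x1 + x2); split; first exact: liD.
    by rewrite mulrDl addrACA.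
  split.
    move=> _ [l [x [Ll ->]]]; exists (- l), (- x); split; first exact: liN.
    by rewrite opprD mulNr.
  move=> r _ [l [x [Ll ->]]]; exists (r * l), (r * x); split; first exact: liM.
  by rewrite mulrDr mulrA.
have : L' 1.
  apply: contrapT => nL'1; apply: nLj; apply: (Lmax L') => //.
    by move=> x Lx; exists x, 0; rewrite mul0r addr0.
  by exists 0, 1; rewrite mul1r add0r; split => //; apply: li0.
case=> l [x [Ll E]]; have [v Hv] := H x; apply: HL1.
have El : l = 1 - x * j by rewrite E addrK.
by rewrite -Hv -El; apply: liM.
Qed.

Lemma lemA (R : pzRingType) (j : R) : jacobson j -> exists v, v * (1 - j) = 1.
Proof.
move=> Hj; apply: contrapT => Hn.
pose I0 y := exists x, y = x * (1 - j).
have HI0 : left_ideal I0.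
  split; first by exists 0; rewrite mul0r.
  split; first by move=> _ _ [x1 ->] [x2 ->]; exists (x1 + x2); rewrite mulrDl.
  split; first by move=> _ [x ->]; exists (- x); rewrite mulNr.
  by move=> r _ [x ->]; exists (r * x); rewrite mulrA.
have HI01 : ~ I0 1 by case=> x E; apply: Hn; exists x; rewrite -E.
have Hr : (false -> rclosed I0) by [].
have [L [HL [_ [HL1 [HIL Lmax]]]]] := zorn_ideal HI0 Hr HI01.
have mL : maximal_left_ideal L.
  split=> //; split=> // L' HL' LL' nL'1; exact: Lmax.
have Lj := Hj L mL.
have L1j : L (1 - j) by apply: HIL; exists 1; rewrite mul1r.
by apply: HL1; rewrite -(subrK j 1); apply: liD.
Qed.

Lemma jac_mulr (R : pzRingType) (j r : R) : jacobson j -> jacobson (j * r).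
Proof.
move=> Hj; apply: lemB => x.
have [w Hw] := lemA (liM (r * x) (@jac_li R) Hj).
exists (1 + x * j * w * r).
move: Hw; rewrite -mulrA; set a := x * j => Hw.
rewrite mulrDl mul1r -mulrA (mulrA x j r) -/a.
have -> : a * (w * r) * (1 - a * r) = a * (w * (1 - r * a)) * r.
  by rewrite !mulrBr !mulr1 !mulrBl !mulrA.
by rewrite Hw mulr1 subrK.
Qed.

Lemma jac_unit (R : pzRingType) (j : R) : jacobson j ->
  exists v, v * (1 - j) = 1 /\ (1 - j) * v = 1.
Proof.
move=> Hj; have [v Hv] := lemA Hj.
have Ev : v = 1 - (- v) * j.
  by rewrite mulNr opprK -Hv mulrBr mulr1 subrK.
have [w Hw] := lemA (liM (- v) (@jac_li R) Hj).
rewrite -Ev in Hw.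
have Ew : w = 1 - j.
  by transitivity (w * (v * (1 - j))); [rewrite Hv mulr1|rewrite mulrA Hw mul1r].
by exists v; split=> //; rewrite -Ew.
Qed.

Lemma tsi_li (R : pzRingType) (M : R -> Prop) : two_sided_ideal M -> left_ideal M.
Proof. by case. Qed.
Lemma tsiMr (R : pzRingType) (M : R -> Prop) x r : two_sided_ideal M -> M x -> M (x * r).
Proof. by case=> _ H; apply: H. Qed.

Lemma unit_notin (R : pzRingType) (M : R -> Prop) u :
  left_ideal M -> ~ M 1 -> is_unit u -> ~ M u.
Proof. by move=> HM HM1 [w [_ Hw]] Mu; apply: HM1; rewrite -Hw; apply: liM. Qed.

Lemma jac_sub_max (R : pzRingType) (M : R -> Prop) :
  maximal_ideal M -> forall x, jacobson x -> M x.
Proof.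
move=> [HM [HM1 Mmax]] x Jx.
pose I y := exists m j, M m /\ jacobson j /\ y = m + j.
have HI : two_sided_ideal I.
  have HMl := tsi_li HM.
  split; first split.
  - by exists 0, 0; split; [apply: li0|split; [exact: (li0 (@jac_li R))|rewrite addr0]].
  split.
    move=> _ _ [m1 [j1 [M1 [J1 ->]]]] [m2 [j2 [M2 [J2 ->]]]].
    exists (m1 + m2), (j1 + j2); split; first exact: liD.
    by split; [exact: (liD (@jac_li R) J1 J2)|rewrite addrACA].
  split.
    move=> _ [m [j [Mm [Jj ->]]]]; exists (- m), (- j); split; first exact: liN.
    by split; [exact: (liN (@jac_li R) Jj)|rewrite opprD].
  move=> r _ [m [j [Mm [Jj ->]]]]; exists (r * m), (r * j); split; first exact: liM.
  by split; [exact: (liM r (@jac_li R) Jj)|rewrite mulrDr].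
  move=> r _ [m [j [Mm [Jj ->]]]]; exists (m * r), (j * r); split; first exact: tsiMr.
  by split; [apply: jac_mulr|rewrite mulrDl].
have [I1|nI1] := pselect (I 1).
  case: I1 => m [j [Mm [Jj E]]]; exfalso.
  have [v [Hv _]] := jac_unit Jj.
  have Em : m = 1 - j by rewrite E addrK.
  by apply: HM1; rewrite -Hv -Em; apply: liM => //; apply: tsi_li.
apply: (Mmax I) => //.
  by move=> y My; exists y, 0; split => //; split; [exact: (li0 (@jac_li R))|rewrite addr0].
by exists 0, x; split; [apply: li0; apply: tsi_li|split => //; rewrite add0r].
Qed.

Lemma Mrw (T : Type) (P : T -> Prop) a b : P a -> a = b -> P b.
Proof. by move=> H <-. Qed.

Lemma bool_dich (R : pzRingType) (M : R -> Prop) : maximal_ideal M ->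
  (forall a, M (a * a - a)) -> forall a, M a \/ M (a - 1).
Proof.
move=> [HM [HM1 Mmax]] Hb.
have HMl := tsi_li HM.
have Hsym : forall x y, M (x * y + y * x).
  move=> x y; have := liB HMl (liB HMl (Hb (x + y)) (Hb x)) (Hb y).
  congr M.
  rewrite mulrDl !mulrDr.
  set p := x * x; set q := x * y; set s := y * x; set t := y * y.
  rewrite !opprB !opprD !addrA.
  rewrite [LHS](ACl ((1*8)*(4*10)*(7*5)*(9*6)*(2*3))).
  by rewrite /= !subrr !add0r.
have H2 : forall x, M (x + x).
  move=> x; apply: (Mrw (liB HMl (Hsym x x) (liD HMl (Hb x) (Hb x)))).
  rewrite !opprD !opprK !addrA.
  by rewrite [LHS](ACl ((1*3)*(2*5)*(4*6))) /= !subrr !add0r.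
have Hcomm : forall x y, M (x * y - y * x).
  move=> x y; apply: (Mrw (liB HMl (Hsym x y) (H2 (y * x)))).
  by rewrite opprD addrA addrK.
move=> a; case: (pselect (M a)) => Ma; [by left|right].
pose I x := M (x * a).
have HI : two_sided_ideal I.
  split; first split.
  - by rewrite /I mul0r; apply: li0.
  split; first by move=> x y; rewrite /I mulrDl; apply: liD.
  split; first by move=> x; rewrite /I mulNr; apply: liN.
  by move=> r x; rewrite /I -mulrA; apply: liM.
  move=> r x Ix; rewrite /I.
  apply: (Mrw (liD HMl (tsiMr r HM Ix) (liM x HMl (Hcomm r a)))).
  by rewrite mulrBr !mulrA addrC subrK.
have MI : forall x, M x -> I x by move=> x Mx; apply: tsiMr.
have nI1 : ~ I 1 by rewrite /I mul1r.
have I1a : I (1 - a).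
  apply: (Mrw (liN HMl (Hb a))).
  by rewrite mulrBl mul1r opprB.
apply: (Mrw (liN HMl (Mmax I HI MI nI1 _ I1a))).
by rewrite opprB.
Qed.


Lemma Z2_11 : (1 + 1 : 'Z_2) = 0. Proof. exact/val_inj. Qed.
Lemma Z2_01 : (0 : 'Z_2) <> 1. Proof. by move/(congr1 val). Qed.
Lemma Z2_cases (z : 'Z_2) : z = 0 \/ z = 1.
Proof. case: z => [[|[|n]] Hn]; [left|right|by []]; exact/val_inj. Qed.

Lemma dich_iso (R : pzRingType) (M : R -> Prop) :
  two_sided_ideal M -> ~ M 1 -> (forall a, M a \/ M (a - 1)) -> quotient_iso_Z2 M.
Proof.
move=> HM HM1 D.
have HMl := tsi_li HM.
have nb : forall x, M x -> M (x - 1) -> False.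
  move=> x Mx Mx1; apply: HM1; apply: (Mrw (liB HMl Mx Mx1)).
  by rewrite opprB addrC subrK.
pose f (x : R) : 'Z_2 := if asbool (M x) then 0 else 1.
have f0 : forall x, M x -> f x = 0 by move=> x Mx; rewrite /f asboolT.
have f1 : forall x, M (x - 1) -> f x = 1.
  by move=> x Mx1; rewrite /f asboolF // => Mx; apply: (nb x).
have M2 : M (1 + 1).
  case: (D (1 + 1)) => // H; exfalso; apply: HM1; apply: (Mrw H); by rewrite addrK.
exists f; split; [|split; [|split; [|split]]].
- move=> x y; case: (D x) => Hx; case: (D y) => Hy.
  + rewrite (f0 _ Hx) (f0 _ Hy); split=> // _; exact: liB.
  + rewrite (f0 _ Hx) (f1 _ Hy); split=> // Hxy; exfalso; apply: (nb y) => //.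
    by apply: (Mrw (liB HMl Hx Hxy)); rewrite opprB addrC subrK.
  + rewrite (f1 _ Hx) (f0 _ Hy); split=> // Hxy; exfalso; apply: (nb x) => //.
    by apply: (Mrw (liD HMl Hxy Hy)); rewrite subrK.
  + rewrite (f1 _ Hx) (f1 _ Hy); split=> // _.
    by apply: (Mrw (liB HMl Hx Hy)); rewrite opprB addrA subrK.
- move=> x y; case: (D x) => Hx; case: (D y) => Hy.
  + by rewrite (f0 _ Hx) (f0 _ Hy) (f0 _ (liD HMl Hx Hy)) addr0.
  + rewrite (f0 _ Hx) (f1 _ Hy) add0r; apply: f1.
    by apply: (Mrw (liD HMl Hx Hy)); rewrite addrA.
  + rewrite (f1 _ Hx) (f0 _ Hy) addr0; apply: f1.
    by apply: (Mrw (liD HMl Hx Hy)); rewrite addrAC.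
  + rewrite (f1 _ Hx) (f1 _ Hy) Z2_11; apply: f0.
    apply: (Mrw (liD HMl (liD HMl Hx Hy) M2)).
    by rewrite !addrA [LHS](ACl ((1*3)*(2*5)*(4*6))) /= !addNr !addr0.
- move=> x y; case: (D x) => Hx.
    by rewrite (f0 _ Hx) mul0r; apply: f0; apply: tsiMr.
  case: (D y) => Hy.
    by rewrite (f0 _ Hy) mulr0; apply: f0; apply: liM.
  rewrite (f1 _ Hx) (f1 _ Hy) mulr1; apply: f1.
  by apply: (Mrw (liD HMl (tsiMr y HM Hx) Hy)); rewrite mulrBl mul1r addrA subrK.
- by apply: f1; rewrite subrr; apply: li0.
- move=> z; case: (Z2_cases z) => ->.
    by exists 0; apply: f0; apply: li0.
  by exists 1; apply: f1; rewrite subrr; apply: li0.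
Qed.

Lemma iso_dich (R : pzRingType) (M : R -> Prop) :
  quotient_iso_Z2 M -> forall a, M a \/ M (a - 1).
Proof.
move=> [f [Hf [HfD [HfM [Hf1 _]]]]] a.
have f0 : f 0 = 0.
  by apply: (@addrI _ (f 0)); rewrite -HfD !addr0.
case: (Z2_cases (f a)) => H.
  by left; rewrite -[a]subr0; apply/Hf; rewrite H f0.
by right; apply/Hf; rewrite H Hf1.
Qed.

Lemma star0 (R : pzRingType) (star : R -> R) : is_involution star -> star 0 = 0.
Proof. by move=> [HsD _]; apply: (@addrI _ (star 0)); rewrite -HsD !addr0. Qed.
Lemma starN (R : pzRingType) (star : R -> R) x : is_involution star -> star (- x) = - star x.
Proof.
move=> Hs; have [HsD _] := Hs.
by apply: (@addrI _ (star x)); rewrite -HsD !subrr star0.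
Qed.
Lemma starB (R : pzRingType) (star : R -> R) x y : is_involution star -> star (x - y) = star x - star y.
Proof. by move=> Hs; have [HsD _] := Hs; rewrite HsD starN. Qed.
Lemma star1 (R : pzRingType) (star : R -> R) : is_involution star -> star 1 = 1.
Proof.
move=> [_ [HsM Hss]]; have := HsM 1 (star 1).
by rewrite mul1r Hss mul1r => E; exact: esym E.
Qed.

Lemma proj_compl (R : pzRingType) (star : R -> R) e : is_involution star ->
  projection star e -> projection star (1 - e).
Proof.
move=> Hs [He2 Hes]; split.
  by rewrite mulrBl mul1r mulrBr mulr1 He2 subrr subr0.
by rewrite starB // star1 // Hes.
Qed.

Lemma comm_compl (R : pzRingType) (e x : R) : x * e = e * x -> (1 - e) * x = x * (1 - e).
Proof. by move=> H; rewrite mulrBl mul1r mulrBr mulr1 H. Qed.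

Lemma idem_proj (R : pzRingType) (star : R -> R) : is_involution star ->
  strongly_star_clean star -> forall f, f * f = f -> star f = f.
Proof.
move=> Hs sc f Hf2.
have [e [v [[He2 Hes] [[w [_ Hw]] [Ef Hc]]]]] := sc f.
have Hfe : f * e = e * f by rewrite Ef mulrDl mulrDr Hc.
have Ev : v = f - e by rewrite Ef addrC addKr.
have Hef : e * f = 0.
  transitivity (w * ((f - e) * (e * f))).
    by rewrite -Ev mulrA Hw mul1r.
  by rewrite mulrBl !mulrA Hfe -(mulrA e f f) Hf2 He2 subrr mulr0.
have H1 : 1 - e - f = 0.
  transitivity (w * ((f - e) * (1 - e - f))).
    by rewrite -Ev mulrA Hw mul1r.
  rewrite !mulrBr !mulr1 !mulrBl Hf2 He2 Hfe Hef !subr0.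
  by rewrite sub0r mulrN opprK mulrBr subrK subrr.
have Ef' := subr0_eq H1.
by rewrite -Ef' starB // star1 // Hes.
Qed.

Lemma idem_sum (R : pzRingType) (e a : R) : e * e = e -> a * a = 0 ->
  e * a + a * e = a -> (e + a) * (e + a) = e + a.
Proof.
move=> He Ha Hs; rewrite mulrDl !mulrDr He Ha addr0 -addrA Hs.
by [].
Qed.

Lemma proj_central (R : pzRingType) (star : R -> R) : is_involution star ->
  (forall g : R, g * g = g -> star g = g) -> forall e : R, e * e = e -> forall r, e * r = r * e.
Proof.
move=> Hs Hip e He2 r.
have [HsD [HsM Hss]] := Hs.
have Hes := Hip e He2.
have Ece : (1 - e) * e = 0 by rewrite mulrBl mul1r He2 subrr.
have Eec : e * (1 - e) = 0 by rewrite mulrBr mulr1 He2 subrr.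
have Ecc : (1 - e) * (1 - e) = 1 - e by rewrite mulrBl mul1r Eec subr0.
have G1 : e * r = e * r * e.
  have Hg : (e + e * r * (1 - e)) * (e + e * r * (1 - e)) = e + e * r * (1 - e).
    apply: idem_sum => //.
      by rewrite -!mulrA (mulrA (1 - e) e) Ece mul0r !mulr0.
    by rewrite -!mulrA Ece !mulr0 addr0 !mulrA He2.
  have := Hip _ Hg; rewrite HsD !HsM Hes starB // star1 // => /addrI E.
  have := congr1 (fun z => e * z) E.
  rewrite /= Hes mulrA Eec mul0r !mulrA He2 mulrBr mulr1 => /esym /subr0_eq.
  done.
have G2 : r * e = e * r * e.
  have Hg : (e + (1 - e) * r * e) * (e + (1 - e) * r * e) = e + (1 - e) * r * e.
    apply: idem_sum => //.
      by rewrite -!mulrA (mulrA e (1 - e)) Eec mul0r !mulr0.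
    by rewrite -!mulrA (mulrA e (1 - e)) Eec mul0r add0r !mulrA -(mulrA _ e e) He2.
  have := Hip _ Hg; rewrite HsD !HsM Hes starB // star1 // => /addrI E.
  have := congr1 (fun z => (1 - e) * z) E.
  rewrite /= Hes (mulrA (1 - e) e) Ece mul0r !mulrA Ecc !mulrBl !mul1r => /esym /subr0_eq.
  done.
by rewrite G1 G2.
Qed.

Lemma unit_jac (R : pzRingType) (star : R -> R) : is_involution star ->
  strongly_star_clean star ->
  (forall M : R -> Prop, maximal_ideal M -> quotient_iso_Z2 M) ->
  forall u : R, is_unit u -> jacobson (1 - u).
Proof.
move=> Hs sc HZ u Hu; apply: lemB => x.
have [f [v [[Hf2 Hfs] [Hv [Eb Hc]]]]] := sc (1 - x * (1 - u)).
have Hcen := proj_central Hs (idem_proj Hs sc) Hf2.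
suff f0 : f = 0.
  by case: Hv => w [_ Hw]; exists w; rewrite Eb f0 add0r.
apply: contrapT => fn0.
pose I0 y := exists r, y = (1 - f) * r.
have HI0 : left_ideal I0.
  split; first by exists 0; rewrite mulr0.
  split; first by move=> _ _ [x1 ->] [x2 ->]; exists (x1 + x2); rewrite mulrDr.
  split; first by move=> _ [y ->]; exists (- y); rewrite mulrN.
  move=> r _ [y ->]; exists (r * y); rewrite !mulrA; congr (_ * _).
  by rewrite mulrBl mulrBr mul1r mulr1 Hcen.
have HI0r : true -> rclosed I0.
  by move=> _ r _ [y ->]; exists (y * r); rewrite mulrA.
have HI01 : ~ I0 1.
  case=> r E; apply: fn0.
  by rewrite -[f]mulr1 E mulrA mulrBr mulr1 Hf2 subrr mul0r.
have [M [HMl [HMr [HM1 [HIM Mmax]]]]] := zorn_ideal HI0 HI0r HI01.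
have HM : two_sided_ideal M by split=> //; apply: HMr.
have mM : maximal_ideal M.
  split=> //; split=> // M' [HM'l HM'r] MM' nM'1.
  by apply: Mmax => //; move=> _; apply: HM'r.
have D := iso_dich (HZ M mM).
have nU : forall w, is_unit w -> ~ M w by move=> w; apply: unit_notin.
have M1u : M (1 - u).
  case: (D u) => H; first by exfalso; apply: (nU u).
  by apply: (Mrw (liN HMl H)); rewrite opprB.
have Mb1 : M (1 - x * (1 - u) - 1).
  by apply: (Mrw (liN HMl (liM x HMl M1u))); rewrite addrAC subrr add0r.
case: (D f) => Hf.
  apply: HM1; apply: (Mrw (liD HMl Hf (HIM (1 - f) _))).
    by exists 1; rewrite mulr1.
  by rewrite addrCA subrr addr0.
apply: (nU v Hv); apply: (Mrw (liB HMl Mb1 Hf)).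
by rewrite Eb opprB !addrA subrK addrAC subrr add0r.
Qed.
Unset Implicit Arguments.

Theorem proposition2p4 (R : pzRingType) (star : R -> R)
  (Hstar : is_involution star) :
  strongly_J_star_clean star <->
  (strongly_star_clean star /\
   (forall M : R -> Prop, maximal_ideal M -> quotient_iso_Z2 M)).
Proof.
have HJ := @jac_li R.
split.
- move=> H; split.
  + move=> a; have [e [u [[He2 Hes] [Ju [Ea Hc]]]]] := H a.
    have Heu : e * u = u * e.
      by move: Hc; rewrite Ea mulrDl mulrDr => /addrI /esym.
    pose s := e + e - 1.
    have Hss : s * s = 1.
      rewrite /s mulrBl mulrBr mul1r mulr1 !mulrDl !mulrDr He2.
      by rewrite addrK opprB addrC subrK.
    have Hse : s * e = e * s.
      by rewrite /s mulrBl mulrBr mul1r mulr1 mulrDl mulrDr He2.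
    exists (1 - e), (s + u); split; first exact: proj_compl.
    split.
      have Jj : jacobson (- (s * u)) := liN HJ (liM s HJ Ju).
      have [v [Hv1 Hv2]] := jac_unit Jj.
      have Esu : s + u = s * (1 - - (s * u)).
        by rewrite opprK mulrDr mulr1 mulrA Hss mul1r.
      exists (v * s); split.
        by rewrite Esu -!mulrA (mulrA _ v) Hv2 mul1r Hss.
      by rewrite Esu mulrA -(mulrA v s s) Hss mulr1 Hv1.
    split.
      rewrite Ea /s !addrA.
      by rewrite [RHS](ACl ((1*5)*(2*3)*(4*6))) /= subrr addNr !add0r.
    apply: comm_compl.
    by rewrite mulrDl mulrDr Hse Heu.
  + move=> M mM; have [HM [HM1 _]] := mM.
    apply: dich_iso => //; apply: (bool_dich mM) => a.
    have [e [u [[He2 Hes] [Ju [Ea Hc]]]]] := H a.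
    have Heu : e * u = u * e.
      by move: Hc; rewrite Ea mulrDl mulrDr => /addrI /esym.
    apply: (jac_sub_max mM).
    apply: (Mrw (liM (e + e + u - 1) HJ Ju)).
    rewrite Ea mulrBl mul1r !mulrDl !mulrDr He2 -Heu !opprD !addrA.
    by rewrite [RHS](ACl ((1*5)*2*3*4*6)) /= subrr add0r.
- move=> [sc HZ] a.
  have [e [u [[He2 Hes] [Hu [Ea Hc]]]]] := sc a.
  exists (1 - e), (u - 1 + (e + e)).
  split; first exact: proj_compl.
  split.
    have J1 : jacobson (u - 1).
      by apply: (@Mrw R (@jacobson R) _ _ (liN HJ (unit_jac Hstar sc HZ Hu))); rewrite opprB.
    have J2 : jacobson (1 + 1 : R).
      have Hm1 : is_unit (- 1 : R) by exists (-1); rewrite mulrNN mulr1.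
      by apply: (@Mrw R (@jacobson R) _ _ (unit_jac Hstar sc HZ Hm1)); rewrite opprK.
    have J3 : jacobson (e + e).
      by apply: (@Mrw R (@jacobson R) _ _ (liM e HJ J2)); rewrite mulrDr mulr1.
    exact: (liD HJ J1 J3).
  split.
    rewrite Ea !addrA.
    by rewrite [RHS](ACl ((1*4)*(2*5)*(6*3))) /= subrr addNr !add0r.
  apply: esym; apply: comm_compl.
  by rewrite Ea mulrDl mulrDr Hc.
Qed.
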